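(* Let $X$ be a locally compact Hausdorff space. If $X$ contains an open dense $\sigma$-compact set and $C_0(X)$ has the countable sup property, then $X$ is CCC.
   Context: $C_0(X)$ is the vector lattice (pointwise order) of continuous real-valued functions on $X$ vanishing at infinity. A vector lattice has the countable sup property if every nonempty subset possessing a supremum contains a countable subset with the same supremum. $X$ is CCC if every family of pairwise disjoint open subsets of $X$ is countable. *)

(* Defs.v *)
From HB Require Import structures.
From mathcomp Require Import all_boot all_order all_algebra.
From mathcomp Require Import all_classical all_reals all_analysis.
Unset Printing Implicit Defensive.
Import Order.TTheory GRing.Theory Num.Theory.
Import numFieldNormedType.Exports.
Local Open Scope classical_set_scope.
Local Open Scope ring_scope.

(* C_0(X): continuous real functions vanishing at infinity, i.e. for every
   eps > 0 the set {x | |f x| >= eps} is compact. *)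
Definition C0 (R : realType) (X : topologicalType) : set (X -> R) :=
  [set f | continuous f /\
           forall eps : R, 0 < eps -> compact [set x | eps <= `|f x|]].

Definition fle (R : realType) (X : Type) (f g : X -> R) : Prop :=
  forall x, f x <= g x.

Definition is_sup_C0 (R : realType) (X : topologicalType)
    (S : set (X -> R)) (g : X -> R) : Prop :=
  C0 R X g /\ (forall f, S f -> fle R X f g) /\
  (forall h, C0 R X h -> (forall f, S f -> fle R X f h) -> fle R X g h).

Definition C0_countable_sup_property (R : realType) (X : topologicalType) : Prop :=
  forall (S : set (X -> R)) (g : X -> R),
    S `<=` C0 R X -> S !=set0 -> is_sup_C0 R X S g ->
    exists S' : set (X -> R), [/\ S' `<=` S, countable S' & is_sup_C0 R X S' g].

Definition sigma_compact (X : topologicalType) (A : set X) : Prop :=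
  exists K : nat -> set X, (forall n, compact (K n)) /\ A = \bigcup_n K n.

Definition CCC (X : topologicalType) : Prop :=
  forall F : set (set X),
    (forall U, F U -> open U) ->
    (forall U V, F U -> F V -> U <> V -> U `&` V = set0) ->
    countable F.

(* Main.v *)
Require Import Defs.
From HB Require Import structures.
From mathcomp Require Import all_boot all_order all_algebra.
From mathcomp Require Import all_classical all_reals all_analysis.
Import Order.TTheory GRing.Theory Num.Theory.
Import numFieldNormedType.Exports.
Local Open Scope classical_set_scope.
Local Open Scope ring_scope.
Lemma bumpf (R : realType) (X : topologicalType) :
  hausdorff_space X -> locally_compact [set: X] ->
  forall K W : set X, compact K -> open W -> K `<=` W ->
  exists phi : X -> R, [/\ continuous phi, (forall x, 0 <= phi x <= 1),
    (forall x, K x -> phi x = 1), (forall x, ~ W x -> phi x = 0) &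
    (forall eps : R, 0 < eps -> compact [set x | eps <= `|phi x|])].
Proof.
move=> hX lX K W cK oW KW.
pose opc := one_point_compactification X.
have hO : hausdorff_space opc by exact: one_point_compactification_hausdorff.
have nO : normal_space opc.
  by apply: compact_normal => //; exact: one_point_compactification_compact.
pose A : set opc := ~` (Some @` W).
pose B : set opc := Some @` K.
have clA : closed A by apply: open_closedC; exact: one_point_compactification_open_some.
have cB : compact B.
  apply: continuous_compact => //; apply: continuous_subspaceT.
  exact: one_point_compactification_some_continuous.
have clB : closed B by exact: compact_closed.
have AB0 : A `&` B = set0.
  by apply/seteqP; split => // y [Ay [x Kx xy]]; apply: Ay; exists x => //; apply: KW.
have := (proj1 (normal_separatorP (R:=R) (T:=opc)) nO A B clA clB AB0).
move=> /(uniform_separatorP (R:=R)) [f [cf f01 fA fB]].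
exists (f \o Some); split.
- move=> x; apply: continuous_comp; first exact: one_point_compactification_some_continuous.
  exact: cf.
- move=> x; have := f01 (f (Some x)) (ex_intro2 _ _ (Some x) I erefl).
  by rewrite /= in_itv /=.
- by move=> x Kx; apply: fB; exists (Some x) => //; exists x.
- move=> x Wx; apply: fA; exists (Some x) => //; move=> [y Wy [yx]]; apply: Wx; rewrite -yx.
  done.
- move=> eps eps0.
  pose C : set opc := [set y | eps <= `|f y|].
  have clC : closed C.
    apply: (@preimage_closed opc R (fun y => `|f y|) [set r | eps <= r]); last exact: closed_ge.
    move=> y _; apply: continuous_comp; first exact: cf.
    exact: norm_continuous.
  have nC : ~ C None.
    rewrite /C /= (_ : f None = 0) ?normr0 ?leNgt ?eps0//.
    by apply: fA; exists None => //; case => y _.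
  have : @nbhs _ opc None (~` C).
    by apply: open_nbhs_nbhs; split => //; exact: closed_openC.
  case=> Q [cQ clQ] QC.
  apply: (subclosed_compact _ cQ).
    have := (@preimage_closed X opc Some C); apply => //.
    move=> y _; exact: one_point_compactification_some_continuous.
  move=> x Cx; apply: contrapT => nQx.
  by have := QC (Some x) (or_introl (ex_intro2 _ _ x nQx erefl)).
Qed.

Lemma countableU2 T (A B : set T) : countable A -> countable B -> countable (A `|` B).
Proof.
move=> cA cB.
have -> : A `|` B = \bigcup_(b in [set: bool]) (if b then A else B).
  apply/seteqP; split => x.
    by case => ?; [exists true | exists false].
  by case => -[] _ ?; [left|right].
by apply: bigcup_countable => // -[].
Qed.

Lemma C0_dom (R : realType) (X : topologicalType) (g f : X -> R) :
  C0 R X g -> continuous f -> (forall x, `|f x| <= `|g x|) -> C0 R X f.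
Proof.
move=> [cg kg] cf fg; split => // eps eps0.
apply: (subclosed_compact _ (kg eps eps0)).
  apply: (@preimage_closed X R (fun y => `|f y|) [set r | eps <= r]); last exact: closed_ge.
  move=> y _; apply: continuous_comp; first exact: cf.
  exact: norm_continuous.
by move=> x /= /le_trans; apply.
Qed.

Local Close Scope ring_scope.
Theorem proposition5p6 (R : realType) (X : topologicalType) :
  hausdorff_space X -> locally_compact [set: X] ->
  (exists D : set X, [/\ open D, dense D & sigma_compact X D]) ->
  C0_countable_sup_property R X ->
  CCC X.
Proof.
Local Open Scope ring_scope.
move=> hX lX [D [oD dD [K [cK DK]]]] csp F oF dF.
apply: contrapT => ncF.
pose E := ~` closure (\bigcup_(U in F) U).
pose F1 := F `|` [set E].
have ncF1 : ~ countable F1.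
  by move=> cF1; apply: ncF; apply: sub_countable cF1; apply: subset_card_le => U FU; left.
have oE : open E by apply: closed_openC; exact: closed_closure.
have oF1 : forall U, F1 U -> open U by move=> U [/oF //|->].
have dFE : forall U, F U -> U `&` E = set0.
  move=> U FU; apply/seteqP; split => // x [Ux]; apply; apply: subset_closure.
  by exists U.
have dF1 : forall U V, F1 U -> F1 V -> U <> V -> U `&` V = set0.
  move=> U V [FU|->] [FV|->] UV //; first exact: dF.
  - exact: dFE.
  - by rewrite setIC; exact: dFE.
have cov : forall O : set X, open O -> O !=set0 -> exists U, F1 U /\ O `&` U !=set0.
  move=> O oO [x Ox].
  have [[U [FU [y [Oy Uy]]]]|nU] := pselect (exists U, F U /\ O `&` U !=set0).
    by exists U; split; [left|exists y].
  exists E; split; first by right.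
  exists x; split => // clx.
  have [y [[U FU Uy] Oy]] := clx O (open_nbhs_nbhs (conj oO Ox)).
  by apply: nU; exists U; split => //; exists y.
pose G n := [set U | F1 U /\ U `&` K n !=set0].
have [n ncG] : exists n, ~ countable (G n).
  apply: contrapT => allc; apply: ncF1.
  have cG : forall n, countable (G n).
    by move=> n; apply: contrapT => ncn; apply: allc; exists n.
  apply: (@sub_countable _ _ _ ([set set0] `|` \bigcup_(n in [set: nat]) G n)).
    apply: subset_card_le => U F1U.
    have [->|/set0P U0] := eqVneq U set0; first by left.
    have [x [Ux Dx]] := dD U U0 (oF1 U F1U).
    move: Dx; rewrite DK => -[m _ Kx].
    by right; exists m => //; split => //; exists x.
  apply: countableU2; first exact: countable1.
  by apply: bigcup_countable => // m _.
have [g [cg g01 gK _ gc]] := @bumpf R X hX lX _ _ (cK n) openT (@subsetT _ (K n)).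
have C0g : C0 R X g by [].
have g0 : forall x, 0 <= g x by move=> x; have /andP[] := g01 x.
pose S := [set f : X -> R | [/\ C0 R X f, (forall x, 0 <= f x <= g x) &
   exists U, F1 U /\ forall x, f x != 0 -> U x]].
have mk : forall U x, F1 U -> U x -> exists2 f, S f & f x = g x.
  move=> U x F1U Ux.
  have [phi [cphi p01 p1 p0 _]] := @bumpf R X hX lX _ _ (@compact_set1 _ x) (oF1 U F1U)
    (fun y (yx : [set x] y) => eq_ind_r U Ux yx).
  exists (fun z => g z * phi z); last by rewrite p1 ?mulr1.
  have cgp : continuous (fun z => g z * phi z).
    by move=> z; apply: continuousM; [exact: cg|exact: cphi].
  split.
  - apply: (@C0_dom R X g _ C0g cgp) => z; rewrite normrM.
    have /andP[a b] := p01 z.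
    by rewrite -[leRHS]mulr1 ler_wpM2l // ger0_norm.
  - move=> z; have /andP[a b] := p01 z.
    by rewrite mulr_ge0 ?g0 //= -[leRHS]mulr1 ler_wpM2l ?g0.
  - exists U; split => // z; apply: contraNP => Uz.
    by rewrite p0 ?mulr0.
have supS : is_sup_C0 R X S g.
  split => //; split; first by move=> f [_ fg _] x; have /andP[] := fg x.
  move=> h C0h ubh x; rewrite leNgt; apply/negP => hx.
  pose O := (fun y => g y - h y) @^-1` [set r : R | 0 < r].
  have oO : open O.
    apply: open_comp; last exact: open_gt.
    by move=> y _; apply: continuousB; [exact: cg|exact: (proj1 C0h)].
  have hx' : O x by rewrite /O /= subr_gt0.
  have [U [F1U [y [Oy Uy]]]] := cov O oO (ex_intro _ x hx').
  have [f Sf fy] := mk U y F1U Uy.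
  have := ubh f Sf y; rewrite fy => gh.
  by move: Oy; rewrite /O /= subr_gt0 ltNge gh.
have [U0 G0] : exists U0, G n U0.
  apply: contrapT => nG; apply: ncG.
  have -> : G n = set0 by apply/seteqP; split => // U GU; apply: nG; exists U.
  exact: countable0.
have Sne : S !=set0.
  exists (fun _ => 0); split.
  - split; first by move=> z; exact: cst_continuous.
    move=> eps eps0; rewrite (_ : [set x | eps <= `|0|] = set0); first exact: compact0.
    by apply/seteqP; split => // z /=; rewrite normr0 leNgt eps0.
  - by move=> z; rewrite lexx g0.
  - by exists U0; split; [case: G0|move=> z; rewrite eqxx].
have SC0 : S `<=` C0 R X by move=> f [].
have [S' [sS' cS' supS']] := csp S g SC0 Sne supS.
have hidx : forall f, exists U, S' f -> F1 U /\ forall x, f x != 0 -> U x.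
  move=> f; have [/sS' [_ _ [U HU]]|nf] := pselect (S' f); first by exists U.
  by exists set0.
have [idx hidx'] := choice hidx.
have cI : countable (idx @` S').
  exact: (sub_countable (card_image_le idx S') cS').
have [U1 [GU1 nI]] : exists U1, G n U1 /\ ~ (idx @` S') U1.
  apply: contrapT => nex; apply: ncG; apply: (sub_countable _ cI).
  apply: subset_card_le => U GU; apply: contrapT => nU; apply: nex; exists U; split.
  - exact: GU.
  - exact: nU.
case: GU1 => F1U1 [x0 [U1x0 Kx0]].
have [psi [cpsi p01 p1 p0 _]] := @bumpf R X hX lX _ _ (@compact_set1 _ x0) (oF1 U1 F1U1)
    (fun y (yx : [set x0] y) => eq_ind_r U1 U1x0 yx).
pose h := fun z => g z * (1 - psi z).
have ch : continuous h.
  move=> z; apply: (continuousM (s:=g) (t:=fun z => 1 - psi z) (x:=z)); first exact: cg.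
  by apply: continuousB; [exact: cst_continuous|exact: cpsi].
have h01 : forall z, 0 <= 1 - psi z <= 1.
  by move=> z; have /andP[a b] := p01 z; rewrite subr_ge0 b /= lerBlDr lerDl.
have C0h : C0 R X h.
  apply: (@C0_dom R X g _ C0g ch) => z; rewrite /h normrM.
  have /andP[a b] := h01 z.
  by rewrite -[leRHS]mulr1 ler_wpM2l // ger0_norm.
have ubh : forall f, S' f -> fle R X f h.
  move=> f S'f z; have [F1i supi] := hidx' f S'f.
  have [_ fg _] := sS' f S'f.
  have [fz0|fz0] := eqVneq (f z) 0.
    by rewrite fz0 /h mulr_ge0 ?g0 //; case/andP: (h01 z).
  have iz := supi z fz0.
  have neq : idx f <> U1 by move=> e; apply: nI; exists f.
  have nU1 : ~ U1 z.
    move=> U1z; have := dF1 _ _ F1i F1U1 neq.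
    by move/seteqP => [/(_ z (conj iz U1z))].
  by rewrite /h p0 // subr0 mulr1; case/andP: (fg z).
have := (proj2 (proj2 supS')) h C0h ubh x0.
by rewrite /h p1 // gK // subrr mulr0 ler10.
Qed.
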